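(* Let $\mathcal{D}$ be a distribution over $\mathcal{X}\times\mathcal{Y}$ where $\mathcal{Y}\subseteq\mathbb{R}^d$ and $\|y\|_\infty\le M$ for all $y\in\mathcal{Y}$, let $\alpha>0$, and let $\mathcal{T}$ be a bucketing with width $w=\sqrt{\alpha/M}$. If a model $h:\mathcal{X}\to\mathcal{Y}$ is $\alpha$-self-consistent, then \[\left|\mathbb{E}_{\mathcal{D}}[\pi_h(x)\cdot h(x)]-\mathbb{E}_{\mathcal{D}}[\pi_h(x)\cdot y]\right|\le 2d\sqrt{\alpha M}.\]
   Context: $\Omega\subseteq[0,1]^d$ is an arbitrary feasible set of actions; a policy is a map $\pi:\mathcal{X}\to\Omega$. For a model $h:\mathcal{X}\to\mathcal{Y}$, its induced policy is $\pi_h(x)=\arg\max_{a\in\Omega}a\cdot h(x)$. A bucketing $\mathcal{T}$ of width $w$ is a partition of $[0,1]$ into $1/w$ consecutive intervals $\tau$ of width $w$. A model $h$ is $\alpha$-consistent with respect to a collection $\mathcal{C}\subseteq 2^{\mathcal{X}}$ if for every $C\in\mathcal{C}$, $\|\mathbb{E}_{\mathcal{D}}[y-h(x)\mid x\in C]\|_\infty\le \alpha/\Pr[x\in C]$. The level sets of a policy $\pi$ are $\mathcal{C}^{\mathcal{T}}_\pi=\{\{x:\pi(x)_i\in\tau\}:i\in[d],\tau\in\mathcal{T}\}$. The model $h$ is $\alpha$-self-consistent if it is $\alpha$-consistent with respect to $\mathcal{C}^{\mathcal{T}}_{\pi_h}$. *)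

(* Defs.v *)
From HB Require Import structures.
From mathcomp Require Import all_boot all_order all_algebra.
From mathcomp Require Import all_classical all_reals all_analysis.

Set Implicit Arguments.
Unset Strict Implicit.
Unset Printing Implicit Defensive.

Import Order.TTheory GRing.Theory Num.Theory.
Local Open Scope classical_set_scope.
Local Open Scope ring_scope.

Definition vec (R : realType) (d : nat) := 'I_d -> R.

Definition dotv (R : realType) (d : nat) (a b : vec R d) : R :=
  \sum_(i < d) a i * b i.

Definition Ex (dsp : measure_display) (T : measurableType dsp) (R : realType)
  (P : probability T R) (f : T -> R) : R :=
  fine (\int[P]_t (f t)%:E).

(* Probability of the event "x in C" where xs : T -> X is the feature part. *)
Definition PrX (dsp : measure_display) (T : measurableType dsp) (R : realType)
  (P : probability T R) (X : Type) (xs : T -> X) (C : set X) : R :=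
  fine (P (xs @^-1` C)).

Definition condEx (dsp : measure_display) (T : measurableType dsp) (R : realType)
  (P : probability T R) (X : Type) (xs : T -> X) (C : set X) (f : T -> R) : R :=
  Ex P (fun t => f t * (\1_(xs @^-1` C) t)) / PrX P xs C.

Definition bucketing (R : realType) (w : R) (n : nat) (tau : 'I_n -> set R) : Prop :=
  [/\ n%:R * w = 1,
      (forall k : 'I_n, exists b1 b2 : bool,
          tau k = [set x | (if b1 then k%:R * w <= x else k%:R * w < x) /\
                           (if b2 then x <= k.+1%:R * w else x < k.+1%:R * w)]),
      (forall k l : 'I_n, k != l -> tau k `&` tau l = set0) &
      \bigcup_(k in [set: 'I_n]) tau k = [set x : R | 0 <= x <= 1]].

Definition level_sets (R : realType) (X : Type) (d n : nat)
  (tau : 'I_n -> set R) (pi : X -> vec R d) : set (set X) :=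
  [set C | exists (i : 'I_d) (k : 'I_n), C = [set x | tau k (pi x i)]].

Definition consistent (dsp : measure_display) (T : measurableType dsp)
  (R : realType) (P : probability T R) (X : Type) (d : nat)
  (xs : T -> X) (ys : T -> vec R d) (h : X -> vec R d) (alpha : R)
  (CC : set (set X)) : Prop :=
  forall C, CC C -> 0 < PrX P xs C ->
    forall i : 'I_d,
      `| condEx P xs C (fun t => ys t i - h (xs t) i) | <= alpha / PrX P xs C.

Definition induced_policy (R : realType) (X : Type) (d : nat)
  (Omega : set (vec R d)) (h : X -> vec R d) (pi : X -> vec R d) : Prop :=
  forall x, Omega (pi x) /\ forall a, Omega a -> dotv a (h x) <= dotv (pi x) (h x).

(* Main.v *)
Require Import Defs.
From HB Require Import structures.
From mathcomp Require Import all_boot all_order all_algebra.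
From mathcomp Require Import all_classical all_reals all_analysis.
From mathcomp Require Import ring lra.
Import Order.TTheory GRing.Theory Num.Theory.
Local Open Scope classical_set_scope.
Local Open Scope ring_scope.

Section Infra.
Context (R : realType) (dsp : measure_display) (T : measurableType dsp)
  (P : probability T R).

Definition bm (f : T -> R) :=
  measurable_fun setT f /\ exists B, forall t, `|f t| <= B.

Lemma bm_int {f} : bm f -> P.-integrable setT (EFin \o f).
Proof.
move=> [mf [B hB]].
apply: (@le_integrable _ _ _ _ _ measurableT _ (EFin \o cst B)) => //.
- exact/measurable_realfun.measurable_EFinP.
- move=> t _ /=; rewrite !lee_fin; exact: le_trans (hB t) (ler_norm _).
- exact: finite_measure_integrable_cst.
Qed.

Lemma bmD {f g} : bm f -> bm g -> bm (fun t => f t + g t).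
Proof.
move=> [mf [B1 h1]] [mg [B2 h2]]; split; first exact: measurable_realfun.measurable_funD.
exists (B1 + B2) => t; apply: (le_trans (ler_normD _ _)); exact: lerD.
Qed.

Lemma bmM {f g} : bm f -> bm g -> bm (fun t => f t * g t).
Proof.
move=> [mf [B1 h1]] [mg [B2 h2]]; split; first exact: measurable_realfun.measurable_funM.
exists (B1 * B2) => t; rewrite normrM; exact: ler_pM.
Qed.

Lemma bm_cst c : bm (fun _ => c).
Proof. by split; [exact: measurable_cst | exists `|c|]. Qed.

Lemma bmN {f} : bm f -> bm (fun t => - f t).
Proof.
move=> hf; suff -> : (fun t => - f t) = (fun t => -1 * f t) by exact: bmM (bm_cst _) hf.
by apply: funext => t; rewrite mulN1r.
Qed.

Lemma bmB {f g} : bm f -> bm g -> bm (fun t => f t - g t).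
Proof. by move=> hf hg; apply: bmD => //; exact: bmN. Qed.

Lemma bm_indic A : measurable A -> bm (\1_A).
Proof.
move=> mA; split; first exact: measurable_realfun.measurable_indic.
exists 1 => t; rewrite /indic; case: (t \in A); rewrite ?normr1 ?normr0 //.
Qed.

Lemma bm_sum (I : Type) (s : seq I) (F : I -> T -> R) :
  (forall i, bm (F i)) -> bm (fun t => \sum_(i <- s) F i t).
Proof.
move=> hF; elim: s => [|a s IH].
  suff -> : (fun t => \sum_(i <- [::]) F i t) = (fun=> 0) by exact: bm_cst.
  by apply: funext => t; rewrite big_nil.
suff -> : (fun t => \sum_(i <- a :: s) F i t) = (fun t => F a t + \sum_(i <- s) F i t).
  exact: bmD (hF a) IH.
by apply: funext => t; rewrite big_cons.
Qed.

Lemma ExD f g : bm f -> bm g -> Ex P (fun t => f t + g t) = Ex P f + Ex P g.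
Proof. move=> hf hg; exact: (RintegralD measurableT (bm_int hf) (bm_int hg)). Qed.

Lemma ExB f g : bm f -> bm g -> Ex P (fun t => f t - g t) = Ex P f - Ex P g.
Proof. move=> hf hg; exact: (RintegralB measurableT (bm_int hf) (bm_int hg)). Qed.

Lemma ExZ c f : bm f -> Ex P (fun t => c * f t) = c * Ex P f.
Proof. move=> hf; exact: (RintegralZl c measurableT (bm_int hf)). Qed.

Lemma Ex0 : Ex P (fun _ => 0) = 0.
Proof. by rewrite /Ex integral0. Qed.

Lemma Ex_sum (I : Type) (s : seq I) (F : I -> T -> R) :
  (forall i, bm (F i)) ->
  Ex P (fun t => \sum_(i <- s) F i t) = \sum_(i <- s) Ex P (F i).
Proof.
move=> hF; elim: s => [|a s IH].
  rewrite big_nil; transitivity (Ex P (fun _ => 0)); last exact: Ex0.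
  by f_equal; apply: funext => t; rewrite big_nil.
rewrite big_cons -IH -ExD //; last exact: bm_sum.
by f_equal; apply: funext => t; rewrite big_cons.
Qed.

Lemma Ex_le f g : bm f -> bm g -> (forall t, f t <= g t) -> Ex P f <= Ex P g.
Proof. move=> hf hg fg; exact: (le_Rintegral measurableT (bm_int hf) (bm_int hg)). Qed.

Lemma Ex_norm f g : bm f -> bm g -> (forall t, `|f t| <= g t) -> `|Ex P f| <= Ex P g.
Proof.
move=> hf hg fg; apply: le_trans (le_normr_Rintegral measurableT (bm_int hf)) _ => //.
apply: (le_Rintegral measurableT _ (bm_int hg)).
  apply: bm_int; case: hf => mf [B hB]; split.
    exact: measurableT_comp.
  by exists B => t; rewrite normr_id.
by move=> t _; exact: fg.
Qed.

Lemma Ex_cst c : Ex P (fun _ => c) = c.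
Proof.
rewrite /Ex -/(Rintegral P setT (fun _ => c)) Rintegral_cst //. have h : P setT = 1%E by exact: probability_setT. set u := fine _. have -> : u = 1 by rewrite /u; exact: (f_equal fine h). by rewrite mulr1. Qed.

Lemma Ex_indic A : measurable A -> Ex P (\1_A) = fine (P A).
Proof. by move=> mA; rewrite /Ex integral_indic // setIT. Qed.

End Infra.
Arguments bm {R dsp T} f.
Arguments bm_int {R dsp T P f}.
Arguments bmD {R dsp T f g}.
Arguments bmM {R dsp T f g}.
Arguments bm_cst {R dsp T} c.
Arguments bmN {R dsp T f}.
Arguments bmB {R dsp T f g}.
Arguments bm_indic {R dsp T A}.
Arguments bm_sum {R dsp T I} s F.
Arguments ExD {R dsp T} P {f g}.
Arguments ExB {R dsp T} P {f g}.
Arguments ExZ {R dsp T} P c {f}.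
Arguments Ex_sum {R dsp T} P {I} s F.
Arguments Ex_le {R dsp T} P {f g}.
Arguments Ex_norm {R dsp T} P {f g}.
Arguments Ex_cst {R dsp T} P c.
Arguments Ex_indic {R dsp T} P {A}.

Lemma point (R : realType) (w : R) (n : nat) (tau : 'I_n -> set R) x :
  bucketing w tau -> 0 <= x <= 1 ->
  exists k0 : 'I_n, [/\ tau k0 x, (forall k, k != k0 -> ~ tau k x) &
                     k0%:R * w <= x <= k0.+1%:R * w].
Proof.
case=> hn hint hdis hcup hx.
have : [set x : R | 0 <= x <= 1] x by [].
rewrite -hcup => -[k _ hk]; exists k; split => //.
  move=> l hl htl.
  have : (tau l `&` tau k) x by split.
  by rewrite hdis.
have [b1 [b2 e]] := hint k.
move: hk; rewrite e => -[h1 h2]; clear e.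
apply/andP; split.
  by case: b1 h1 => // /ltW.
by case: b2 h2 => // /ltW.
Qed.

Lemma mtau (R : realType) (w : R) (n : nat) (tau : 'I_n -> set R) k :
  bucketing w tau -> measurable (tau k).
Proof.
case=> _ hint _ _; have [b1 [b2 ->]] := hint k.
have -> : [set x | (if b1 then k%:R * w <= x else k%:R * w < x) /\
                   (if b2 then x <= k.+1%:R * w else x < k.+1%:R * w)] =
          [set` Interval (BSide b1 (k%:R * w)) (BSide (~~ b2) (k.+1%:R * w))].
  apply/seteqP; split => x /=; rewrite in_itv /=;
    case: b1; case: b2 => //=; try (by move=> [-> ->]);
    by move=> /andP[-> ->].
exact: measurable_itv.
Qed.

Lemma coord (R : realType) (dsp : measure_display) (T : measurableType dsp)
  (P : probability T R) (w M alpha : R) (n : nat) (tau : 'I_n -> set R)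
  (p g : T -> R) :
  bucketing w tau -> 0 < w -> 0 <= M -> 0 < alpha ->
  measurable_fun setT p -> (forall t, 0 <= p t <= 1) ->
  measurable_fun setT g -> (forall t, `|g t| <= 2 * M) ->
  (forall k : 'I_n, 0 < fine (P (p @^-1` tau k)) ->
     `| Ex P (fun t => g t * \1_(p @^-1` tau k) t) / fine (P (p @^-1` tau k)) |
       <= alpha / fine (P (p @^-1` tau k))) ->
  `| Ex P (fun t => p t * g t) | <= n%:R * alpha + M * w.
Proof.
move=> hb w0 M0 a0 mp hp mg hg hcons.
have mA k : measurable (p @^-1` tau k).
  by have := mp measurableT (tau k) (@mtau _ _ _ _ k hb); rewrite setTI.
have bp : bm p.
  split => //; exists 1 => t; have := hp t => /andP[h1 h2].
  by rewrite ger0_norm.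
have bg : bm g by split => //; exists (2 * M).
have bI k : bm (\1_(p @^-1` tau k) : T -> R) := bm_indic (mA k).
pose ck (k : 'I_n) := k%:R * w + w / 2.
pose c t := \sum_(k < n) ck k * \1_(p @^-1` tau k) t.
have bc : bm c.
  apply: (bm_sum _ (fun k t => ck k * \1_(p @^-1` tau k) t)) => k.
  exact: bmM (bm_cst _) (bI k).
have hc t : `|p t - c t| <= w / 2.
  have [k0 [h0 hne hk]] := @point _ _ _ _ _ hb (hp t).
  rewrite /c (bigD1 k0) //= big1 ?addr0; last first.
    by move=> k hk0; rewrite indicE memNset ?mulr0 //; exact: hne.
  rewrite indicE mem_set // mulr1 /ck ler_norml.
  move: hk; rewrite -natr1 => /andP[h1 h2].
  apply/andP; split; lra.
have -> : (fun t => p t * g t) = (fun t => c t * g t + (p t - c t) * g t).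
  by apply: funext => t; ring.
rewrite ExD; last first.
- exact: bmM (bmB bp bc) bg.
- exact: bmM bc bg.
apply: le_trans (ler_normD _ _) _; apply: lerD.
- have -> : (fun t => c t * g t) =
            (fun t => \sum_(k < n) ck k * (g t * \1_(p @^-1` tau k) t)).
    apply: funext => t; rewrite /c mulr_suml; apply: eq_bigr => k _; ring.
  rewrite Ex_sum; last by move=> k; apply: bmM (bm_cst _) (bmM bg (bI k)).
  rewrite (eq_bigr (fun k => ck k * Ex P (fun t => g t * \1_(p @^-1` tau k) t)));
    last by move=> k _; rewrite ExZ //; exact: bmM bg (bI k).
  apply: le_trans (ler_norm_sum _ _ _) _.
  have -> : n%:R * alpha = \sum_(k < n) alpha.
    by rewrite sumr_const card_ord mulr_natl.
  apply: ler_sum => k _.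
  rewrite normrM -[alpha]mul1r; apply: ler_pM => //.
  + have hk : (k.+1 <= n)%N := ltn_ord k.
    have : k.+1%:R <= n%:R :> R by rewrite ler_nat.
    case: hb => hn _ _ _.
    rewrite -natr1 => hkn.
    have h1 : (k%:R + 1) * w <= n%:R * w by rewrite ler_pM2r.
    have k0 : 0 <= k%:R :> R by [].
    rewrite ger0_norm /ck; [lra|].
    have : 0 <= k%:R * w by rewrite mulr_ge0 // ltW.
    lra.
  + case: (ltP 0 (fine (P (p @^-1` tau k)))) => hpk.
      have := hcons k hpk.
      have hi : 0 < (fine (P (p @^-1` tau k)))^-1 by rewrite invr_gt0.
      by rewrite normrM (ger0_norm (ltW hi)) ler_pM2r.
    apply: le_trans (Ex_norm _ (f := fun t => g t * \1_(p @^-1` tau k) t)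
      (g := fun t => (2 * M) * \1_(p @^-1` tau k) t) _ _ _) _.
    * exact: bmM bg (bI k).
    * exact: bmM (bm_cst _) (bI k).
    * move=> t; rewrite normrM indicE.
      case: (t \in _) => /=; rewrite ?normr1 ?normr0 ?mulr1 ?mulr0 //.
    rewrite ExZ // Ex_indic //.
    apply: le_trans (ltW a0); apply: mulr_ge0_le0 => //.
    by rewrite mulr_ge0.
- apply: le_trans (Ex_norm _ (g := fun _ => M * w) _ _ _) _.
  + exact: bmM (bmB bp bc) bg.
  + exact: bm_cst.
  + move=> t; rewrite normrM.
    have -> : M * w = (w / 2) * (2 * M) by field.
    by apply: ler_pM.
  by rewrite Ex_cst.
Qed.

Theorem corollary1
  (R : realType) (dsp : measure_display) (T : measurableType dsp)
  (P : probability T R) (X : Type) (d : nat)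
  (Ys : set (vec R d)) (M : R) (xs : T -> X) (ys : T -> vec R d)
  (Omega : set (vec R d)) (h : X -> vec R d) (pi : X -> vec R d)
  (alpha : R) (n : nat) (tau : 'I_n -> set R) :
  (forall y, Ys y -> forall i, `|y i| <= M) ->
  (forall t, Ys (ys t)) ->
  (forall a, Omega a -> forall i, 0 <= a i <= 1) ->
  (forall x, Ys (h x)) ->
  (forall i, measurable_fun setT (fun t => ys t i)) ->
  (forall i, measurable_fun setT (fun t => h (xs t) i)) ->
  (forall i, measurable_fun setT (fun t => pi (xs t) i)) ->
  0 < alpha ->
  bucketing (Num.sqrt (alpha / M)) tau ->
  induced_policy Omega h pi ->
  consistent P xs ys h alpha (level_sets tau pi) ->
  `| Ex P (fun t => dotv (pi (xs t)) (h (xs t))) -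
     Ex P (fun t => dotv (pi (xs t)) (ys t)) |
    <= 2 * d%:R * Num.sqrt (alpha * M).
Proof.
move=> hYM hys hOm hhY mys mh mpi a0 hb hind hcons.
set w := Num.sqrt (alpha / M).
set s := Num.sqrt (alpha * M).
have w0 : 0 < w.
  rewrite lt0r sqrtr_ge0 andbT; apply/eqP => w0.
  case: hb => hn _ _ _; move: hn; rewrite -/w w0 mulr0 => /eqP.
  by rewrite eq_sym oner_eq0.
have aM : 0 < alpha / M by rewrite -sqrtr_gt0.
have M0 : 0 < M.
  by move: aM; rewrite pmulr_rgt0 // invr_gt0.
have hn : n%:R * w = 1 by case: hb.
have w2 : w ^+ 2 = alpha / M by rewrite sqr_sqrtr // ltW.
have s2 : s ^+ 2 = alpha * M by rewrite sqr_sqrtr // mulr_ge0 // ltW.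
have s0 : 0 <= s by exact: sqrtr_ge0.
have sw : s * w = alpha.
  have : (s * w) ^+ 2 = alpha ^+ 2.
    by rewrite exprMn s2 w2; field; rewrite gt_eqF.
  move/(congr1 Num.sqrt); rewrite !sqrtr_sqr !ger0_norm //.
    exact: ltW.
  by rewrite mulr_ge0 // ltW.
have Mw : M * w = s.
  have : (M * w) ^+ 2 = s ^+ 2.
    by rewrite exprMn s2 w2; field; rewrite gt_eqF.
  move/(congr1 Num.sqrt); rewrite !sqrtr_sqr !ger0_norm //.
  by rewrite mulr_ge0 // ltW.
have na : n%:R * alpha = s by rewrite -sw mulrCA hn mulr1.
have hp x i : 0 <= pi x i <= 1 by apply: hOm; case: (hind x).
have bpi i : bm (fun t => pi (xs t) i).
  split => //; exists 1 => t; have /andP[h1 h2] := hp (xs t) i.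
  by rewrite ger0_norm.
have bys i : bm (fun t => ys t i) by split => //; exists M => t; exact: hYM.
have bh i : bm (fun t => h (xs t) i) by split => //; exists M => t; exact: hYM.
have coordi i : `| Ex P (fun t => pi (xs t) i * (ys t i - h (xs t) i)) | <= 2 * s.
  have := @coord R dsp T P w M alpha n tau (fun t => pi (xs t) i)
    (fun t => ys t i - h (xs t) i) hb w0 (ltW M0) a0 (mpi i) (fun t => hp (xs t) i).
  rewrite na Mw => H; have -> : 2 * s = s + s by ring.
  apply: H.
  - by case: (bmB (bys i) (bh i)).
  - move=> t; apply: le_trans (ler_normB _ _) _.
    by rewrite mulr2n mulrDl mul1r lerD // hYM.
  - move=> k hpk.
    have hC : level_sets tau pi [set x | tau k (pi x i)] by exists i, k.
    exact: (hcons _ hC hpk i).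
rewrite distrC -ExB; last first.
- by apply: bm_sum => i; exact: bmM (bpi i) (bh i).
- by apply: bm_sum => i; exact: bmM (bpi i) (bys i).
have -> : (fun t => dotv (pi (xs t)) (ys t) - dotv (pi (xs t)) (h (xs t))) =
    (fun t => \sum_(i < d) (pi (xs t) i * (ys t i - h (xs t) i))).
  apply: funext => t; rewrite /dotv -sumrB; apply: eq_bigr => i _; ring.
rewrite Ex_sum; last by move=> i; exact: bmM (bpi i) (bmB (bys i) (bh i)).
apply: le_trans (ler_norm_sum _ _ _) _.
apply: le_trans (ler_sum _ (fun i _ => coordi i)) _.
rewrite sumr_const card_ord.
have -> : 2 * s *+ d = 2 * d%:R * s by rewrite -mulr_natr; ring.
by [].
Qed.
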